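(* Assume $M$ is projective in $\sigma[M]$ and $M$ is an Artinian $R$-module. Then either $P(M)=M$, or there exist finitely many primitive $M$-ideals $P_1,\dots,P_n$ of $M$ with $P(M)=\bigcap_{i=1}^n P_i$.
   Context: $R$ is a ring with identity, modules are unital left $R$-modules, $M$ is a fixed left $R$-module; $\sigma[M]$ is the full subcategory of $R$-modules isomorphic to submodules of $M$-generated modules. $\mathrm{Ann}_M(X):=\bigcap_{f\in\mathrm{Hom}_R(M,X)}\ker f$. A submodule $N\le M$ is an $M$-ideal if $N$ is the intersection of the kernels of all homomorphisms from $M$ into modules of some class $\mathcal C$. For $N\le M$ and a module $X$, $N\cdot X$ is the intersection of the kernels of all homomorphisms $X\to W$ where $W$ ranges over modules with $f(N)=0$ for all $f\in\mathrm{Hom}_R(M,W)$ (for $Y\le X$, $N\cdot Y$ is formed regarding $Y$ as a module). A module $X\ne0$ is $M$-prime if for all $N\le M$, $Y\le X$, $N\cdot Y=0$ implies $N\cdot X=0$ or $Y=0$. A proper $M$-ideal $P$ is a prime $M$-ideal if $P=\mathrm{Ann}_M(X)$ for some $M$-prime module $X$. An $M$-ideal $P$ is primitive if $P=\mathrm{Ann}_M(S)$ for some simple module $S$. $P(M)$ is the intersection of all prime $M$-ideals of $M$ ($P(M)=M$ if there are none). *)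

(* Defs.v *)
From HB Require Import structures.
From mathcomp Require Import all_boot all_order all_algebra.
Set Implicit Arguments. Unset Strict Implicit. Unset Printing Implicit Defensive.
Import GRing.Theory.
Local Open Scope ring_scope.

Section ModuleTheory.
Variable R : pzRingType.

Definition submodule (X : lmodType R) (N : X -> Prop) : Prop :=
  [/\ N 0, (forall x y, N x -> N y -> N (x + y)) & (forall (a : R) x, N x -> N (a *: x))].

Definition trivial_mod (X : lmodType R) : Prop := forall x : X, x = 0.

Definition simple_mod (S : lmodType R) : Prop :=
  ~ trivial_mod S /\
  forall N : S -> Prop, submodule N ->
    (forall x, N x -> x = 0) \/ (forall x, N x).

(* X is M-generated: X = Tr(M, X), i.e. every element is a finite sum of
   images of homomorphisms M -> X (equivalently X is an epimorphic image of a
   direct sum of copies of M). *)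
Definition M_generated (M X : lmodType R) : Prop :=
  forall x : X, exists (k : nat) (f : 'I_k -> {linear M -> X}) (m : 'I_k -> M),
    x = \sum_(i < k) f i (m i).

(* sigma[M]: modules isomorphic to submodules of M-generated modules. *)
Definition in_sigma (M X : lmodType R) : Prop :=
  exists (Y : lmodType R) (i : {linear X -> Y}), M_generated M Y /\ injective i.

Definition projective_in_sigma (M : lmodType R) : Prop :=
  forall (A B : lmodType R) (g : {linear A -> B}) (f : {linear M -> B}),
    in_sigma M A -> in_sigma M B -> (forall b, exists a, g a = b) ->
    exists h : {linear M -> A}, forall m, g (h m) = f m.

Definition artinian (M : lmodType R) : Prop :=
  forall N : nat -> M -> Prop,
    (forall n, submodule (N n)) ->
    (forall n x, N n.+1 x -> N n x) ->
    exists n, forall k, (n <= k)%N -> forall x, N k x <-> N n x.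

Definition AnnM (M X : lmodType R) : M -> Prop :=
  fun m => forall f : {linear M -> X}, f m = 0.

Definition M_ideal (M : lmodType R) (N : M -> Prop) : Prop :=
  exists C : lmodType R -> Prop,
    forall m, N m <-> (forall (W : lmodType R), C W -> forall f : {linear M -> W}, f m = 0).

Definition prodM (M : lmodType R) (N : M -> Prop) (X : lmodType R) : X -> Prop :=
  fun x => forall W : lmodType R,
    (forall f : {linear M -> W}, forall n, N n -> f n = 0) ->
    forall g : {linear X -> W}, g x = 0.

(* M-prime module.  Submodules Y <= X are represented (up to isomorphism) by
   modules Y with an injective linear map into X; N.Y is computed regarding Y
   as a module. *)
Definition M_prime (M X : lmodType R) : Prop :=
  ~ trivial_mod X /\
  forall (N : M -> Prop) (Y : lmodType R) (i : {linear Y -> X}),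
    submodule N -> injective i ->
    (forall y : Y, prodM N y -> y = 0) ->
    (forall x : X, prodM N x -> x = 0) \/ trivial_mod Y.

Definition prime_M_ideal (M : lmodType R) (P : M -> Prop) : Prop :=
  [/\ M_ideal P, (exists m, ~ P m) &
      exists X : lmodType R, M_prime M X /\ forall m, P m <-> AnnM X m].

Definition primitive_M_ideal (M : lmodType R) (P : M -> Prop) : Prop :=
  M_ideal P /\ exists S : lmodType R, simple_mod S /\ forall m, P m <-> AnnM S m.

(* P(M): intersection of all prime M-ideals (= M if there are none). *)
Definition PM (M : lmodType R) : M -> Prop :=
  fun m => forall P : M -> Prop, prime_M_ideal P -> P m.

End ModuleTheory.

(* Main.v *)
Require Import Defs.
From HB Require Import structures.
From mathcomp Require Import all_boot all_order all_algebra.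
From Stdlib Require Import ClassicalEpsilon Classical.
Set Implicit Arguments. Unset Strict Implicit. Unset Printing Implicit Defensive.
Import GRing.Theory.
Local Open Scope ring_scope.
Set Warnings "-notation-overridden -ambiguous-paths".

Section SubMod.
Variables (R : pzRingType) (X : lmodType R) (L : X -> Prop) (HL : submodule L).
Definition Lb : {pred X} := fun x => if excluded_middle_informative (L x) then true else false.
Lemma LbP x : reflect (L x) (Lb x).
Proof. rewrite /Lb; case: excluded_middle_informative => h; by constructor. Qed.
Lemma Lb_closed : subsemimod_closed Lb.
Proof.
case: HL => H0 HD HZ; split; first split.
- exact/LbP.
- by move=> x y /LbP hx /LbP hy; apply/LbP; apply: HD.
- by move=> a x /LbP hx; apply/LbP; apply: HZ.
Qed.
HB.instance Definition _ := GRing.isSubmodClosed.Build R X Lb Lb_closed.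
Definition subT' (h : submodule L) := {x : X | Lb x}.
Notation subT := (subT' HL).
HB.instance Definition _ := [isSub for (@sval X Lb) : subT -> X].
HB.instance Definition _ := [Choice of subT by <:].
HB.instance Definition _ := [SubChoice_isSubLmodule of subT by <:].
Definition subv : {linear subT -> X} := val.
End SubMod.

Section Inv.
Variables (R : pzRingType) (A B : lmodType R) (i : {linear A -> B})
  (inj : injective i) (sur : forall b, exists a, i a = b).
Definition jinv (b : B) : A := proj1_sig (constructive_indefinite_description _ (sur b)).
Lemma jinvK b : i (jinv b) = b.
Proof. exact: proj2_sig (constructive_indefinite_description _ (sur b)). Qed.
Lemma jinv_lin : linear jinv.
Proof. move=> a x y; apply: inj; by rewrite linearP !jinvK. Qed.
HB.instance Definition _ := GRing.isLinear.Build R B A *:%R jinv jinv_lin.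
End Inv.

Section Main.
Variables (R : pzRingType) (M : lmodType R).

Lemma AnnM_sub (X : lmodType R) : submodule (@AnnM R M X).
Proof.
split.
- by move=> f; rewrite linear0.
- by move=> x y hx hy f; rewrite linearD hx hy addr0.
- by move=> a x hx f; rewrite linearZ /= hx scaler0.
Qed.

Lemma prodM_img (N : M -> Prop) (Z : lmodType R) (f : {linear M -> Z}) n :
  N n -> prodM N (f n).
Proof. move=> Nn W HW g; exact: (HW (g \o f) n Nn). Qed.

Lemma min_exists (Phi : (M -> Prop) -> Prop) : artinian M ->
  (forall Q, Phi Q -> submodule Q) -> forall Q0, Phi Q0 ->
  exists Q, Phi Q /\ forall Q', Phi Q' -> (forall m, Q' m -> Q m) -> forall m, Q m -> Q' m.
Proof.
move=> art Hs Q0 PQ0; apply: NNPP => Hno.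
pose sp (Q Q' : M -> Prop) := Phi Q' /\ (forall m, Q' m -> Q m) /\ exists m, Q m /\ ~ Q' m.
have step : forall Q, Phi Q -> exists Q', sp Q Q'.
  move=> Q PQ; apply: NNPP => H1; apply: Hno; exists Q; split => // Q' PQ' sub m Qm.
  apply: NNPP => nQ'm; apply: H1; exists Q'; split => //; split => //; exists m; by split.
pose nx Q := epsilon (inhabits Q0) (sp Q).
have nxP Q : Phi Q -> sp Q (nx Q) by move=> PQ; apply: epsilon_spec; exact: step.
pose c k := iter k nx Q0.
have cP k : Phi (c k) by elim: k => [|k IH] //=; exact: (nxP _ IH).1.
have [n Hn] := art c (fun k => Hs _ (cP k)) (fun k x => (nxP _ (cP k)).2.1 x).
have [m [cm ncm]] := (nxP _ (cP n)).2.2.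
apply: ncm; exact: (Hn n.+1 (leqnSn n) m).2 cm.
Qed.

Inductive FI : (M -> Prop) -> Prop :=
| FI0 : FI (fun _ => True)
| FIS Q (S : lmodType R) : FI Q -> simple_mod S -> FI (fun m => Q m /\ AnnM S m).

Lemma FI_sub Q : FI Q -> submodule Q.
Proof.
elim => [|Q' S _ [H0 HD HZ] _]; first by split.
have [A0 AD AZ] := AnnM_sub S.
split.
- by split.
- by move=> x y [? ?] [? ?]; split; [apply: HD | apply: AD].
- by move=> a x [? ?]; split; [apply: HZ | apply: AZ].
Qed.

Lemma FI_fam Q : FI Q -> exists n (P : 'I_n -> M -> Prop),
  (forall i, exists S, simple_mod S /\ forall m, P i m <-> AnnM S m) /\
  forall m, Q m <-> forall i, P i m.
Proof.
elim => [|Q' S _ [n [P [hP hQ]]] simS].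
  exists 0%N, (fun _ _ => True); split; first by case.
  by move=> m; split.
pose P' : 'I_n.+1 -> M -> Prop :=
  fun i => if unlift ord_max i is Some j then P j else AnnM S.
exists n.+1, P'; split.
  move=> i; rewrite /P'; case: (unlift ord_max i) => [j|]; first exact: hP.
  by exists S.
move=> m; split.
  move=> [Qm Am] i; rewrite /P'; case: (unlift ord_max i) => [j|] //.
  exact: (hQ m).1 Qm j.
move=> H; split.
  apply/(hQ m).2 => j; have := H (lift ord_max j); by rewrite /P' liftK.
have := H ord_max; by rewrite /P' unlift_none.
Qed.

Lemma ann_ideal (S : lmodType R) : M_ideal (@AnnM R M S).
Proof.
exists (fun W => W = S) => m; split.
  by move=> Am W eW; subst W.
by move=> H f; exact: H S erefl f.
Qed.

Lemma simple_prime (S : lmodType R) : simple_mod S -> M_prime M S.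
Proof.
move=> [ntS HS]; split => // N Y i _ inj NY.
case: (classic (trivial_mod Y)) => [tY|ntY]; [by right|left].
have sur : forall b, exists a, i a = b.
  have Hs : submodule (fun b : S => exists a, i a = b).
    split.
    - by exists 0; rewrite linear0.
    - by move=> x y [a <-] [b <-]; exists (a + b); rewrite linearD.
    - by move=> r x [a <-]; exists (r *: a); rewrite linearZ.
  case: (HS _ Hs) => [H0|//]; exfalso; apply: ntY => y.
  apply: inj; rewrite linear0; apply: H0; by exists y.
move=> x px.
have hj : jinv sur x = 0.
  exact: (px Y (fun f n Nn => NY _ (prodM_img f Nn)) (jinv sur : {linear S -> Y})).
by rewrite -(jinvK sur x) hj linear0.
Qed.

Definition N0 : M -> Prop := fun m => forall S : lmodType R, simple_mod S -> AnnM S m.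

Lemma N0_sub : submodule N0.
Proof.
split.
- by move=> S _; case: (AnnM_sub S).
- by move=> x y hx hy S sS; case: (AnnM_sub S) => _ HD _; apply: HD; [apply: hx|apply: hy].
- by move=> a x hx S sS; case: (AnnM_sub S) => _ _ HZ; apply: HZ; apply: hx.
Qed.

Lemma N0_sub_PM (art : artinian M) m : N0 m -> PM m.
Proof.
move=> N0m P [_ [m0 nPm0] [X [primeX HP]]].
apply/HP => f.
have [m1 [f0 f0m1]] : exists m1 (f0 : {linear M -> X}), f0 m1 <> 0.
  apply: NNPP => H; apply: nPm0; apply/HP => f0.
  apply: NNPP => h; apply: H; exists m0, f0; exact h.
pose Phi (K : M -> Prop) := submodule K /\ exists k, K k /\ f0 k <> 0.
have PhiT : Phi (fun _ => True).
  by split; [split | exists m1].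
have [K [[sK [k0 [Kk0 fk0]]] minK]] :=
  @min_exists Phi art (fun K (h : Phi K) => h.1) _ PhiT.
case: sK => K0 KD KZ.
pose L (x : X) := exists k, K k /\ f0 k = x.
have HL : submodule L.
  split.
  - by exists 0; split => //; rewrite linear0.
  - by move=> x y [a [Ka <-]] [b [Kb <-]]; exists (a + b); split; [apply: KD|rewrite linearD].
  - by move=> r x [a [Ka <-]]; exists (r *: a); split; [apply: KZ|rewrite linearZ].
pose Y := subT' HL.
pose i : {linear Y -> X} := subv HL.
have inj : injective i by exact: val_inj.
have i0 : i 0 = 0 by rewrite linear0.
have valL : forall y : Y, L (i y).
  by move=> y; apply/LbP; exact: valP y.
have simY : simple_mod Y.
  split.
    move=> tY.
    have Lx : Lb L (f0 k0) by apply/LbP; exists k0.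
    apply: fk0.
    have e : i (exist _ (f0 k0) Lx) = f0 k0 by [].
    by rewrite -e (tY (exist _ (f0 k0) Lx)) i0.
  move=> N' [N'0 N'D N'Z].
  case: (classic (forall y, N' y -> y = 0)) => [H|H]; [by left|right].
  have [y1 [N'y1 y1n0]] : exists y1, N' y1 /\ y1 <> 0.
    apply: NNPP => H1; apply: H => y Ny; apply: NNPP => hy; apply: H1; exists y; by split.
  pose K' k := K k /\ exists y, N' y /\ i y = f0 k.
  have PhiK' : Phi K'.
    split.
      split.
      - by split => //; exists 0; split => //; rewrite i0 linear0.
      - move=> x y [Kx [a [Na ea]]] [Ky [b [Nb eb]]]; split; first exact: KD.
        by exists (a + b); split; [apply: N'D|rewrite !linearD ea eb].
      - move=> r x [Kx [a [Na ea]]]; split; first exact: KZ.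
        by exists (r *: a); split; [apply: N'Z|rewrite !linearZ ea].
    have [k1 [Kk1 e1]] := valL y1.
    exists k1; split; first by split => //; exists y1.
    rewrite e1 => h; apply: y1n0; apply: inj; by rewrite h i0.
  have sub := minK K' PhiK' (fun k h => h.1).
  move=> y; have [k [Kk ek]] := valL y.
  have [_ [y' [Ny' ey']]] := sub k Kk.
  have -> : y = y' by apply: inj; rewrite ey' ek.
  exact: Ny'.
have NY : forall y : Y, prodM N0 y -> y = 0.
  move=> y py; exact: (py Y (fun g n Nn => Nn Y simY g) idfun).
case: (primeX.2 N0 Y i N0_sub inj NY) => [H|H].
  exact: H _ (prodM_img f N0m).
by case: simY => /(_ H).
Qed.

End Main.

Theorem theorem5p7 (R : pzRingType) (M : lmodType R) :
  projective_in_sigma M -> artinian M ->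
  (forall m : M, PM m) \/
  exists (n : nat) (P : 'I_n -> M -> Prop),
    (forall i, primitive_M_ideal (P i)) /\
    (forall m : M, PM m <-> (forall i, P i m)).
Proof.
move=> _ art; right.
have [Q [FQ minQ]] := min_exists (Phi := @FI _ M) art (@FI_sub _ M) (@FI0 _ M).
have QN0 : forall m, Q m -> N0 m.
  move=> m Qm S simS.
  by have [] := minQ _ (FIS FQ simS) (fun m h => h.1) m Qm.
have [n [P [hP hQ]]] := FI_fam FQ.
exists n, P; split.
  move=> i; have [S [simS HS]] := hP i; split; last by exists S.
  exists (fun W => W = S) => m; split.
    by move=> Pm W eW; subst W; exact: (HS m).1 Pm.
  by move=> H; apply/(HS m).2 => f; exact: H S erefl f.
move=> m; split.
  move=> PMm i; have [S [simS HS]] := hP i; apply/(HS m).2.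
  case: (classic (AnnM S m)) => // nA.
  apply: (PMm (AnnM S)); split.
  - exact: ann_ideal.
  - by exists m.
  - by exists S; split => //; exact: simple_prime.
move=> H; apply: (N0_sub_PM art); apply: QN0; exact/(hQ m).2.
Qed.
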